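(* Let $f_1,\dots,f_n:\mathbb R^d\to\mathbb R$ be convex and differentiable with $L_i$-Lipschitz gradients ($L_i>0$), $f=\frac1n\sum_if_i$, and let $x_*\in\mathbb R^d$ be any fixed point (in the paper, a minimizer of $F=f+\psi$). For any permutation $\sigma=(\sigma^1,\dots,\sigma^n)$ of $[n]$, $$\sum_{i=2}^n\frac{L_{\sigma^i}}{n}\Big\|\sum_{j=1}^{i-1}\nabla f_{\sigma^j}(x_* )\Big\|^2\le n^2\bar L\sigma^2_{\mathrm{any}}.$$ If $\sigma$ is uniformly distributed over all permutations of $[n]$, then $$\mathbb E\left[\sum_{i=2}^n\frac{L_{\sigma^i}}{n}\Big\|\sum_{j=1}^{i-1}\nabla f_{\sigma^j}(x_* )\Big\|^2\right]\le\frac23n\bar L\sigma^2_{\mathrm{rand}}.$$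
   Context: $\bar L=\frac1n\sum_{i=1}^nL_i$; $\sigma^2_{\mathrm{any}}=\frac1n\sum_{i=1}^n\|\nabla f_i(x_* )\|^2$; $\sigma^2_{\mathrm{rand}}=\sigma^2_{\mathrm{any}}+n\|\nabla f(x_* )\|^2$; $\|\cdot\|$ is the Euclidean norm. *)

(* Defs.v *)
From HB Require Import structures.
From mathcomp Require Import all_boot all_order all_algebra all_fingroup.
From mathcomp Require Import all_classical all_reals.
From mathcomp Require Import topology normedtype derive.
Set Implicit Arguments. Unset Strict Implicit. Unset Printing Implicit Defensive.
Import Order.TTheory GRing.Theory Num.Theory.
Import numFieldNormedType.Exports.
Local Open Scope ring_scope.

Definition dotv {R : realType} {d : nat} (u v : 'rV[R]_d) : R :=
  \sum_(k < d) u 0 k * v 0 k.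
Definition sqnorm {R : realType} {d : nat} (u : 'rV[R]_d) : R := dotv u u.
Definition enorm {R : realType} {d : nat} (u : 'rV[R]_d) : R := Num.sqrt (sqnorm u).

Definition is_gradient {R : realType} {d : nat}
  (f : 'rV[R]_d -> R) (g : 'rV[R]_d -> 'rV[R]_d) : Prop :=
  forall x, differentiable f x /\ forall v, 'd f x v = dotv (g x) v.

Definition convex_fun {R : realType} {d : nat} (f : 'rV[R]_d -> R) : Prop :=
  forall (x y : 'rV[R]_d) (t : R), 0 <= t <= 1 ->
    f (t *: x + (1 - t) *: y) <= t * f x + (1 - t) * f y.

Definition lipschitz_grad {R : realType} {d : nat}
  (g : 'rV[R]_d -> 'rV[R]_d) (L : R) : Prop :=
  forall x y, enorm (g x - g y) <= L * enorm (x - y).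

(* The quantity  sum_{i=2}^n L_{s^i}/n * || sum_{j<i} grad f_{s^j}(x_star) ||^2
   (0-based indices: i ranges over 1..n-1, j over 0..i-1). *)
Definition shuffle_sum {R : realType} {d n : nat}
  (L : 'I_n -> R) (gs : 'I_n -> 'rV[R]_d) (s : 'S_n) : R :=
  \sum_(i < n | (1 <= i)%N) L (s i) / n%:R *
     sqnorm (\sum_(j < n | (j < i)%N) gs (s j)).

Definition Lbar {R : realType} {n : nat} (L : 'I_n -> R) : R :=
  (\sum_(i < n) L i) / n%:R.
Definition sigma_any {R : realType} {d n : nat} (gs : 'I_n -> 'rV[R]_d) : R :=
  (\sum_(i < n) sqnorm (gs i)) / n%:R.
(* gradient of f = (1/n) sum f_i at x_star is (1/n) sum grad f_i(x_star) *)
Definition sigma_rand {R : realType} {d n : nat} (gs : 'I_n -> 'rV[R]_d) : R :=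
  sigma_any gs + n%:R * sqnorm (n%:R^-1 *: \sum_(i < n) gs i).

(* Main.v *)
Require Import Defs.
From HB Require Import structures.
From mathcomp Require Import all_boot all_order all_algebra all_fingroup.
From mathcomp Require Import all_classical all_reals.
From mathcomp Require Import topology normedtype derive.
From mathcomp Require Import ring lra zify.
Import Order.TTheory GRing.Theory Num.Theory.
Import numFieldNormedType.Exports.
Local Open Scope ring_scope.

Section Alg.
Variables (R : realType) (d : nat).
Implicit Types u w : 'rV[R]_d.

Lemma sqnorm_ge0 u : 0 <= sqnorm u.
Proof. by apply: sumr_ge0 => k _; rewrite -expr2 sqr_ge0. Qed.

Lemma dotv_sumr I (r : seq I) (P : pred I) (F : I -> 'rV[R]_d) u :
  dotv (\sum_(j <- r | P j) F j) u = \sum_(j <- r | P j) dotv (F j) u.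
Proof.
rewrite /dotv; under eq_bigr => k _ do rewrite summxE mulr_suml.
by rewrite exchange_big.
Qed.

Lemma dotv_suml I (r : seq I) (P : pred I) (F : I -> 'rV[R]_d) u :
  dotv u (\sum_(j <- r | P j) F j) = \sum_(j <- r | P j) dotv u (F j).
Proof.
rewrite /dotv; under eq_bigr => k _ do rewrite summxE mulr_sumr.
by rewrite exchange_big.
Qed.

Lemma sqnorm_sum I (r : seq I) (P : pred I) (F : I -> 'rV[R]_d) :
  sqnorm (\sum_(j <- r | P j) F j) =
  \sum_(j <- r | P j) \sum_(k <- r | P k) dotv (F j) (F k).
Proof.
rewrite /sqnorm dotv_sumr; apply: eq_bigr => j _; by rewrite dotv_suml.
Qed.

Lemma dotv_le u w : 2 * dotv u w <= sqnorm u + sqnorm w.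
Proof.
rewrite /sqnorm /dotv -big_split mulr_sumr /=; apply: ler_sum => k _.
have := sqr_ge0 (u 0 k - w 0 k); rewrite -!expr2; nra.
Qed.

Lemma sqnorm_subr_le u w : sqnorm (u - w) <= 2 * sqnorm u + 2 * sqnorm w.
Proof.
rewrite /sqnorm /dotv !mulr_sumr -big_split /=; apply: ler_sum => k _.
rewrite !mxE; have := sqr_ge0 (u 0 k + w 0 k); rewrite -!expr2; nra.
Qed.

Lemma sqnorm_subr u w : sqnorm (u - w) = sqnorm u - 2 * dotv u w + sqnorm w.
Proof.
rewrite /sqnorm /dotv mulr_sumr -sumrB -big_split /=; apply: eq_bigr => k _.
rewrite !mxE; ring.
Qed.

Lemma dotvC u w : dotv u w = dotv w u.
Proof. by apply: eq_bigr => k _; rewrite mulrC. Qed.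
End Alg.


Section Perm.
Variables (R : realType) (n : nat).

Lemma sum_perm_mul (t : 'S_n) (H : 'S_n -> R) :
  \sum_(s : 'S_n) H s = \sum_(s : 'S_n) H (t * s)%g.
Proof. exact: (reindex_inj (mulgI t)). Qed.

Definition h3 (F : 'I_n -> 'I_n -> 'I_n -> R) i j k :=
  \sum_(s : 'S_n) F (s i) (s j) (s k).
Definition h2 (F : 'I_n -> 'I_n -> R) i j :=
  \sum_(s : 'S_n) F (s i) (s j).

Lemma h3_t F (t : 'S_n) i j k : h3 F i j k = h3 F (t i) (t j) (t k).
Proof. by rewrite /h3 (sum_perm_mul t); apply: eq_bigr => s _; rewrite !permM. Qed.
Lemma h2_t F (t : 'S_n) i j : h2 F i j = h2 F (t i) (t j).
Proof. by rewrite /h2 (sum_perm_mul t); apply: eq_bigr => s _; rewrite !permM. Qed.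

Lemma h2_trans F i j i' j' : i != j -> i' != j' -> h2 F i j = h2 F i' j'.
Proof.
move=> hij hij'.
rewrite (h2_t F (tperm i i')) tpermL.
set j1 := tperm i i' j.
have h1 : i' != j1 by rewrite -[X in X != _](tpermL i i') (inj_eq perm_inj).
rewrite (h2_t F (tperm j1 j')) tpermL tpermD //; by rewrite eq_sym.
Qed.

Lemma h3_trans F i j k i' j' k' :
  i != j -> i != k -> j != k -> i' != j' -> i' != k' -> j' != k' ->
  h3 F i j k = h3 F i' j' k'.
Proof.
move=> hij hik hjk hij' hik' hjk'.
rewrite (h3_t F (tperm i i')) tpermL.
set j1 := tperm i i' j; set k1 := tperm i i' k.
have h1 : i' != j1 by rewrite -[X in X != _](tpermL i i') (inj_eq perm_inj).
have h2 : i' != k1 by rewrite -[X in X != _](tpermL i i') (inj_eq perm_inj).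
have h3' : j1 != k1 by rewrite (inj_eq perm_inj).
rewrite (h3_t F (tperm j1 j')) tpermL tpermD //; try by rewrite eq_sym.
set k2 := tperm j1 j' k1.
have e : tperm j1 j' i' = i' by rewrite tpermD // eq_sym.
have h4 : i' != k2 by rewrite -[X in X != _]e (inj_eq perm_inj).
have h5 : j' != k2 by rewrite -[X in X != _](tpermL j1 j') (inj_eq perm_inj).
rewrite (h3_t F (tperm k2 k')) tpermL !tpermD //; try by rewrite eq_sym.
Qed.

Definition D3 (F : 'I_n -> 'I_n -> 'I_n -> R) :=
  \sum_a \sum_(b | b != a) \sum_(c | (c != a) && (c != b)) F a b c.
Definition D2 (F : 'I_n -> 'I_n -> R) :=
  \sum_a \sum_(b | b != a) F a b.

Lemma avg3 F : \sum_i \sum_(j | j != i) \sum_(k | (k != i) && (k != j)) h3 F i j k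
  = n`!%:R * D3 F.
Proof.
rewrite /h3.
under eq_bigr => i _ do under eq_bigr => j _ do rewrite exchange_big.
under eq_bigr => i _ do rewrite exchange_big.
rewrite exchange_big /=.
have H : forall s : 'S_n, \sum_i \sum_(j | j != i) \sum_(k | (k != i) && (k != j))
   F (s i) (s j) (s k) = D3 F.
  move=> s; rewrite /D3; symmetry; rewrite (reindex_inj (@perm_inj _ s)) /=; apply: eq_bigr => i _.
  rewrite (reindex_inj (@perm_inj _ s)) /=; apply: eq_big => [j|j _].
    by rewrite (inj_eq perm_inj).
  rewrite (reindex_inj (@perm_inj _ s)) /=; apply: eq_big => [k|k _] //.
  by rewrite !(inj_eq perm_inj).
under eq_bigr => s _ do rewrite H.
by rewrite sumr_const card_Sn mulr_natl.
Qed.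

Lemma avg2 F : \sum_i \sum_(j | j != i) h2 F i j = n`!%:R * D2 F.
Proof.
rewrite /h2.
under eq_bigr => i _ do rewrite exchange_big.
rewrite exchange_big /=.
have H : forall s : 'S_n, \sum_i \sum_(j | j != i) F (s i) (s j) = D2 F.
  move=> s; rewrite /D2; symmetry; rewrite (reindex_inj (@perm_inj _ s)) /=; apply: eq_bigr => i _.
  rewrite (reindex_inj (@perm_inj _ s)) /=; apply: eq_big => [j|j _] //.
  by rewrite (inj_eq perm_inj).
under eq_bigr => s _ do rewrite H.
by rewrite sumr_const card_Sn mulr_natl.
Qed.

Lemma count1 (i : 'I_n) (c : R) : \sum_(j | j != i) c = (n%:R - 1) * c.
Proof.
have := sumr_const (pred_of_simpl (@predT 'I_n)) c.
rewrite (bigD1 i) //= cardT size_enum_ord => h.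
have -> : \sum_(j | true && (j != i)) c = \sum_(j | j != i) c by [].
rewrite -mulr_natl in h; lra.
Qed.

Lemma count2 (i j : 'I_n) (c : R) : j != i ->
  \sum_(k | (k != i) && (k != j)) c = (n%:R - 2) * c.
Proof.
move=> hji; have := count1 i c; rewrite (bigD1 j) //= => h; lra.
Qed.

Lemma count3_lem (c : R) : \sum_(i : 'I_n) \sum_(j | j != i) \sum_(k | (k != i) && (k != j)) c
  = n%:R * (n%:R - 1) * (n%:R - 2) * c.
Proof.
under eq_bigr => i _ do under eq_bigr => j hj do rewrite count2 //.
under eq_bigr => i _ do rewrite count1.
by rewrite sumr_const cardT size_enum_ord -mulr_natl; ring.
Qed.

Lemma key3 F i j k : i != j -> i != k -> j != k ->
  n%:R * (n%:R - 1) * (n%:R - 2) * h3 F i j k = n`!%:R * D3 F.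
Proof.
move=> hij hik hjk; rewrite -avg3 -count3_lem; apply: eq_bigr => a _.
apply: eq_bigr => b hb; apply: eq_bigr => c /andP[hca hcb].
by apply: h3_trans => //; rewrite eq_sym.
Qed.

Lemma key2 F i j : i != j ->
  n%:R * (n%:R - 1) * h2 F i j = n`!%:R * D2 F.
Proof.
move=> hij; rewrite -avg2.
have -> : n%:R * (n%:R - 1) * h2 F i j = \sum_(a : 'I_n) \sum_(b | b != a) h2 F i j.
  under eq_bigr => a _ do rewrite count1.
  by rewrite sumr_const cardT size_enum_ord -mulr_natl; ring.
apply: eq_bigr => a _; apply: eq_bigr => b hb.
by apply: h2_trans => //; rewrite eq_sym.
Qed.
End Perm.


Arguments sqnorm_ge0 {R d}. Arguments dotv_le {R d}. Arguments sqnorm_subr_le {R d}. Arguments sqnorm_subr {R d}. Arguments dotvC {R d}.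
Section Main.
Variables (R : realType) (d n : nat) (L : 'I_n -> R) (v : 'I_n -> 'rV[R]_d).
Hypothesis Lpos : forall i, 0 < L i.
Hypothesis n0 : (0 < n)%N.

Lemma sum_cond_le (P : pred 'I_n) (f : 'I_n -> R) : (forall i, 0 <= f i) ->
  \sum_(i | P i) f i <= \sum_i f i.
Proof.
move=> h; rewrite big_mkcond /=; apply: ler_sum => i _.
by case: (P i) => //.
Qed.

Lemma sum_perm_re (s : 'S_n) (f : 'I_n -> R) : \sum_k f (s k) = \sum_k f k.
Proof. by rewrite [RHS](reindex_inj (@perm_inj _ s)). Qed.

Let A := \sum_i sqnorm (v i).

Lemma sum_perm_x (s : 'S_n) : \sum_k sqnorm (v (s k)) = A.
Proof. exact: (sum_perm_re s (fun k => sqnorm (v k))). Qed.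

Lemma part1_norm (s : 'S_n) (P : pred 'I_n) :
  sqnorm (\sum_(j | P j) v (s j)) <= n%:R * A.
Proof.
rewrite sqnorm_sum.
apply: (@le_trans _ _ (\sum_(j | P j) \sum_(k | P k)
    ((sqnorm (v (s j)) + sqnorm (v (s k))) / 2))).
  apply: ler_sum => j _; apply: ler_sum => k _.
  have := dotv_le (v (s j)) (v (s k)); lra.
apply: (@le_trans _ _ (\sum_j \sum_k
    ((sqnorm (v (s j)) + sqnorm (v (s k))) / 2))).
  apply: (@le_trans _ _ (\sum_j \sum_(k | P k)
    ((sqnorm (v (s j)) + sqnorm (v (s k))) / 2))).
    apply: sum_cond_le => j; apply: sumr_ge0 => k _.
    have := sqnorm_ge0 (v (s j)); have := sqnorm_ge0 (v (s k)); lra.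
  apply: ler_sum => j _; apply: sum_cond_le => k.
  have := sqnorm_ge0 (v (s j)); have := sqnorm_ge0 (v (s k)); lra.
have hA : \sum_(i < n) sqnorm (v (s i)) = A by apply: sum_perm_x.
under eq_bigr => j _ do rewrite -mulr_suml big_split /= hA sumr_const card_ord.
rewrite -mulr_suml big_split /= sumrMnl hA sumr_const card_ord -mulr_natl.
have : 0 <= A by apply: sumr_ge0 => i _; apply: sqnorm_ge0.
lra.
Qed.

Lemma part1 (s : 'S_n) :
  shuffle_sum L v s <= n%:R ^+ 2 * Lbar L * sigma_any v.
Proof.
have nn : n%:R != 0 :> R by rewrite pnatr_eq0 -lt0n.
have n0' : 0 < n%:R :> R by rewrite ltr0n.
rewrite /shuffle_sum. idtac "A".
apply: (@le_trans _ _ (\sum_(i < n | (1 <= i)%N) L (s i) * A)).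
  apply: ler_sum => i _. idtac "B".
  have hN := part1_norm s (fun j : 'I_n => (j < i)%N).
  have hL := Lpos (s i).
  rewrite -(mulrA (L (s i))) ler_pM2l //. idtac "C".
  rewrite mulrC ler_pdivrMr //. idtac "D". by rewrite mulrC.
idtac "E".
apply: (@le_trans _ _ (\sum_(i < n) L (s i) * A)).
  apply: sum_cond_le => i; apply: mulr_ge0; first exact: ltW.
  by apply: sumr_ge0 => k _; exact: sqnorm_ge0.
idtac "F".
rewrite -mulr_suml (sum_perm_re s L) /Lbar /sigma_any -/A.
have -> : n%:R ^+ 2 * ((\sum_(i < n) L i) / n%:R) * (A / n%:R) = (\sum_k L k) * A.
  by field.
by [].
Qed.
End Main.

Arguments sqnorm_ge0 {R d}. Arguments dotv_le {R d}. Arguments sqnorm_subr_le {R d}. Arguments sqnorm_subr {R d}. Arguments dotvC {R d}.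

Arguments h2 {R n}. Arguments h3 {R n}. Arguments D2 {R n}. Arguments D3 {R n}. Arguments key2 {R n} F {i j}. Arguments key3 {R n} F {i j k}.
Section P2.
Variables (R : realType) (d n : nat) (L : 'I_n -> R) (v : 'I_n -> 'rV[R]_d).

Definition F2 (a b : 'I_n) := L a * sqnorm (v b).
Definition F3 (a b c : 'I_n) := L a * dotv (v b) (v c).

Lemma shuffle_expand (s : 'S_n) : shuffle_sum L v s =
  \sum_(i < n | (1 <= i)%N) \sum_(j < n | (j < i)%N) n%:R^-1 *
    (F2 (s i) (s j) + \sum_(k < n | (k < i)%N && (k != j)) F3 (s i) (s j) (s k)).
Proof.
rewrite /shuffle_sum; apply: eq_bigr => i _.
rewrite sqnorm_sum mulr_sumr; apply: eq_bigr => j hj.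
rewrite (bigD1 j) //= /F2 /F3 -mulr_sumr /sqnorm.
ring.
Qed.

Lemma sum_expand : \sum_(s : 'S_n) shuffle_sum L v s =
  \sum_(i < n | (1 <= i)%N) \sum_(j < n | (j < i)%N) n%:R^-1 *
    (h2 F2 i j + \sum_(k < n | (k < i)%N && (k != j)) h3 F3 i j k).
Proof.
under eq_bigr => s _ do rewrite shuffle_expand.
rewrite exchange_big; apply: eq_bigr => i _.
rewrite exchange_big; apply: eq_bigr => j _.
rewrite -mulr_sumr big_split /= /h2 /h3; congr (_ * (_ + _)).
by rewrite exchange_big.
Qed.

Definition K2 := n`!%:R * D2 F2 / (n%:R * (n%:R - 1)).
Definition K3 := n`!%:R * D3 F3 / (n%:R * (n%:R - 1) * (n%:R - 2)).

Lemma h2_val (i j : 'I_n) : i != j -> h2 F2 i j = K2.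
Proof.
move=> hij.
have hn : (2 <= n)%N.
  have := ltn_ord i; have := ltn_ord j.
  have : (nat_of_ord i != nat_of_ord j) by [].
  move/eqP => ?; lia.
have hn' : 2 <= n%:R :> R by rewrite (ler_nat R 2 n).
have nz : n%:R * (n%:R - 1) != 0 :> R.
  by apply: mulf_neq0; apply/eqP; lra.
have n1 : n%:R != 0 :> R by apply/eqP; lra.
have n2 : n%:R - 1 != 0 :> R by apply/eqP; lra.
rewrite /K2 -(key2 F2 hij); field; by rewrite n1 n2.
Qed.

Lemma h3_val (i j k : 'I_n) : i != j -> i != k -> j != k -> h3 F3 i j k = K3.
Proof.
move=> hij hik hjk.
have hn : (3 <= n)%N.
  have := ltn_ord i; have := ltn_ord j; have := ltn_ord k.
  have : (nat_of_ord i != nat_of_ord j) by [].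
  have : (nat_of_ord i != nat_of_ord k) by [].
  have : (nat_of_ord j != nat_of_ord k) by [].
  move/eqP => ?; move/eqP => ?; move/eqP => ?; lia.
have hn' : 3 <= n%:R :> R by rewrite (ler_nat R 3 n).
have nz : n%:R * (n%:R - 1) * (n%:R - 2) != 0 :> R.
  by apply: mulf_neq0; [apply: mulf_neq0|]; apply/eqP; lra.
have n1 : n%:R != 0 :> R by apply/eqP; lra.
have n2 : n%:R - 1 != 0 :> R by apply/eqP; lra.
have n3 : n%:R - 2 != 0 :> R by apply/eqP; lra.
rewrite /K3 -(key3 F3 hij hik hjk); field; by rewrite n1 n2 n3.
Qed.


Lemma sum_lt_const (i : 'I_n) (c : R) : \sum_(j < n | (j < i)%N) c = i%:R * c.
Proof.
rewrite -(big_ord_widen _ (fun _ => c) (ltnW (ltn_ord i))) sumr_const card_ord.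
by rewrite mulr_natl.
Qed.

Lemma sum_lt_ne_const (i j : 'I_n) (c : R) : (j < i)%N ->
  \sum_(k < n | (k < i)%N && (k != j)) c = (i%:R - 1) * c.
Proof. move=> hj; have := sum_lt_const i c; rewrite (bigD1 j) //= => h; lra. Qed.

Lemma total_sum : \sum_(s : 'S_n) shuffle_sum L v s = n%:R^-1 *
  (K2 * \sum_(i < n | (1 <= i)%N) i%:R
   + K3 * \sum_(i < n | (1 <= i)%N) (i%:R * (i%:R - 1))).
Proof.
rewrite sum_expand mulrDr !mulr_sumr -big_split; apply: eq_bigr => i hi.
rewrite (eq_bigr (fun j => n%:R^-1 * (K2 + (i%:R - 1) * K3))); last first.
  move=> j hj.
  have hij : i != j by apply/eqP => e; rewrite e ltnn in hj.
  rewrite h2_val //; congr (_ * (_ + _)).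
  rewrite (eq_bigr (fun _ => K3)); first by rewrite sum_lt_ne_const.
  move=> k /andP[hk1 hk2].
  apply: h3_val => //; last by rewrite eq_sym.
  by apply/eqP => e; rewrite e ltnn in hk1.
rewrite sum_lt_const /=; ring.
Qed.
End P2.

Arguments sqnorm_ge0 {R d}. Arguments dotv_le {R d}. Arguments sqnorm_subr_le {R d}. Arguments sqnorm_subr {R d}. Arguments dotvC {R d}.
Arguments h2 {R n}. Arguments h3 {R n}. Arguments D2 {R n}. Arguments D3 {R n}.
Arguments F2 {R d n}. Arguments F3 {R d n}. Arguments K2 {R d n}. Arguments K3 {R d n}.

Lemma sqnorm_scale (R : realType) d (c : R) (u : 'rV[R]_d) :
  sqnorm (c *: u) = c ^+ 2 * sqnorm u.
Proof. rewrite /sqnorm /dotv mulr_sumr; apply: eq_bigr => k _; rewrite !mxE; ring. Qed.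

Lemma drop_cond (R : realType) (f : nat -> R) m : f 0%N = 0 ->
  \sum_(i < m | (1 <= i)%N) f i = \sum_(i < m) f i.
Proof.
move=> f0; rewrite big_mkcond; apply: eq_bigr => -[[|i] hi] _ //=.
Qed.

Lemma S1_val (R : realType) m : 2 * \sum_(i < m) (i%:R : R) = m%:R * (m%:R - 1).
Proof.
elim: m => [|m IH]; first by rewrite big_ord0 mulr0 mul0r.
rewrite big_ord_recr /= mulrDr IH -addn1 natrD; ring.
Qed.

Lemma S2_val (R : realType) m :
  3 * \sum_(i < m) ((i%:R : R) * (i%:R - 1)) = m%:R * (m%:R - 1) * (m%:R - 2).
Proof.
elim: m => [|m IH]; first by rewrite big_ord0 mulr0 !mul0r.
rewrite big_ord_recr /= mulrDr IH -addn1 natrD; ring.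
Qed.

Section Fin.
Variables (R : realType) (d n : nat) (L : 'I_n -> R) (v : 'I_n -> 'rV[R]_d).
Let A := \sum_i sqnorm (v i).
Let T := \sum_i v i.

Lemma A_split a : A = sqnorm (v a) + \sum_(b | b != a) sqnorm (v b).
Proof. by rewrite /A (bigD1 a). Qed.

Lemma D2_val : D2 (F2 L v) = \sum_a L a * (A - sqnorm (v a)).
Proof.
rewrite /D2; apply: eq_bigr => a _; rewrite /F2 -mulr_sumr (A_split a); congr (_ * _).
ring.
Qed.

Lemma D3_val : D3 (F3 L v) =
  \sum_a L a * (sqnorm (T - v a) - (A - sqnorm (v a))).
Proof.
rewrite /D3; apply: eq_bigr => a _.
under eq_bigr => b _ do rewrite /F3 -mulr_sumr.
rewrite -mulr_sumr; congr (_ * _).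
have e1 : T - v a = \sum_(b | b != a) v b.
  rewrite /T (bigD1 a) //=; rewrite addrC addrK //.
rewrite e1 sqnorm_sum (A_split a).
have -> : \sum_(j | j != a) \sum_(k | k != a) dotv (v j) (v k) =
   \sum_(j | j != a) (sqnorm (v j) + \sum_(k | (k != a) && (k != j)) dotv (v j) (v k)).
  by apply: eq_bigr => j hj; rewrite (bigD1 j).
rewrite big_split /=; ring.
Qed.
End Fin.

Arguments sqnorm_ge0 {R d}. Arguments dotv_le {R d}. Arguments sqnorm_subr_le {R d}. Arguments sqnorm_subr {R d}. Arguments dotvC {R d}.
Arguments h2 {R n}. Arguments h3 {R n}. Arguments D2 {R n}. Arguments D3 {R n}.
Arguments F2 {R d n}. Arguments F3 {R d n}. Arguments K2 {R d n}. Arguments K3 {R d n}.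

Lemma part2 (R : realType) (d n : nat) (L : 'I_n -> R) (v : 'I_n -> 'rV[R]_d) :
  (0 < n)%N -> (forall i, 0 < L i) ->
  n`!%:R^-1 * \sum_(s : 'S_n) shuffle_sum L v s
       <= 2%:R / 3%:R * n%:R * Lbar L * sigma_rand v.
Proof.
move=> n0 Lpos.
have nn : n%:R != 0 :> R by rewrite pnatr_eq0 -lt0n.
have n0' : 0 < n%:R :> R by rewrite ltr0n.
have nf : n`!%:R != 0 :> R by rewrite pnatr_eq0 -lt0n fact_gt0.
rewrite (@total_sum R d n L v) /K2 /K3.
have hS1 : \sum_(i < n | (1 <= i)%N) (i%:R : R) = n%:R * (n%:R - 1) / 2.
  rewrite (@drop_cond R (fun i : nat => (i%:R : R)) n) //; have := S1_val R n; lra.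
have hS2 : \sum_(i < n | (1 <= i)%N) ((i%:R : R) * (i%:R - 1)) =
    n%:R * (n%:R - 1) * (n%:R - 2) / 3.
  rewrite (@drop_cond R (fun i : nat => (i%:R : R) * (i%:R - 1)) n) ?mul0r //.
  have := S2_val R n; lra.
rewrite hS1 hS2.
set N := n%:R : R.
set P2 := N * (N - 1).
set P3 := P2 * (N - 2).
set X2 := D2 (F2 L v). set X3 := D3 (F3 L v).
set e2 := P2 / P2. set e3 := P3 / P3.
have -> : n`!%:R^-1 * (N^-1 * (n`!%:R * X2 / P2 * (P2 / 2) + n`!%:R * X3 / P3 * (P3 / 3)))
   = (n`!%:R^-1 * n`!%:R) * (N^-1 * (X2 * e2 / 2 + X3 * e3 / 3)).
  rewrite /e2 /e3; ring.
rewrite mulVf // mul1r.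
have he : (e2 = 0 /\ e3 = 0) \/ (e2 = 1 /\ e3 = 0) \/ (e2 = 1 /\ e3 = 1).
  case: (eqVneq P2 0) => h2.
    by left; rewrite /e2 /e3 /P3 h2 !mul0r.
  case: (eqVneq P3 0) => h3.
    by right; left; rewrite /e2 /e3 h3 mul0r divff.
  by right; right; rewrite /e2 /e3 !divff.
rewrite /Lbar /sigma_rand /sigma_any sqnorm_scale.
set A := \sum_i sqnorm (v i).
set T := \sum_i v i.
set SL := \sum_i L i.
have -> : 2%:R / 3%:R * N * (SL / N) * (A / N + N * (N^-1 ^+ 2 * sqnorm T))
   = N^-1 * (2 / 3 * SL * (A + sqnorm T)).
  by field.
rewrite ler_pM2l ?invr_gt0 //.
rewrite /X2 /X3 D2_val D3_val -/A -/T.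
rewrite !mulr_suml -big_split /= /SL mulr_sumr mulr_suml.
apply: ler_sum => a _.
have hT : 0 <= sqnorm T by apply: sqnorm_ge0.
have hx : 0 <= sqnorm (v a) by apply: sqnorm_ge0.
have hxA : sqnorm (v a) <= A.
  rewrite /A (bigD1 a) //= lerDl; apply: sumr_ge0 => b _; exact: sqnorm_ge0.
have hTv := sqnorm_subr_le T (v a).
have hL : 0 <= L a by apply: ltW.
set x := sqnorm (v a) in hx hxA hTv *.
set y := sqnorm (T - v a) in hTv *.
set z := sqnorm T in hT hTv *.
have -> : L a * (A - x) * e2 / 2 + L a * (y - (A - x)) * e3 / 3 =
   L a * ((A - x) * e2 / 2 + (y - (A - x)) * e3 / 3) by ring.
have -> : 2 / 3 * L a * (A + z) = L a * (2 / 3 * (A + z)) by ring.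
apply: ler_wpM2l => //.
case: he => [[-> ->]|[[-> ->]|[-> ->]]]; lra.
Qed.


Theorem mainTheorem13 (R : realType) (d n : nat)
  (f : 'I_n -> 'rV[R]_d -> R) (g : 'I_n -> 'rV[R]_d -> 'rV[R]_d)
  (L : 'I_n -> R) (xs : 'rV[R]_d) :
  (0 < n)%N ->
  (forall i, convex_fun (f i)) ->
  (forall i, is_gradient (f i) (g i)) ->
  (forall i, 0 < L i) ->
  (forall i, lipschitz_grad (g i) (L i)) ->
  (forall s : 'S_n,
     shuffle_sum L (fun i => g i xs) s
       <= n%:R ^+ 2 * Lbar L * sigma_any (fun i => g i xs)) /\
  (n`!%:R^-1 * \sum_(s : 'S_n) shuffle_sum L (fun i => g i xs) s
       <= 2%:R / 3%:R * n%:R * Lbar L * sigma_rand (fun i => g i xs)).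
Proof.
move=> n0 _ _ Lpos _; split.
  by move=> s; apply: (@part1 R d n L (fun i => g i xs) Lpos n0 s).
exact: (@part2 R d n L (fun i => g i xs) n0 Lpos).
Qed.
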